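(* Let $d\ge1$ and let $\mathfrak{T}:\mathcal{S}(\mathbb{R}^{2d})\to\mathcal{S}'(\mathbb{R}^{2d})$ be a non-zero continuous linear operator such that there is a function $\Phi:\mathbb{R}^{4d}\to\mathbb{R}^{4d}$ with $\mathfrak{T}\rho(\lambda)F=c\,\rho(\Phi(\lambda))\mathfrak{T}F$ for all $\lambda\in\mathbb{R}^{4d}$, $F\in\mathcal{S}(\mathbb{R}^{2d})$ (with constants $c\in\mathbb{C}$ possibly depending on $\lambda$). Let $$H=\{\nu\in\mathbb{R}^{4d}:\ \exists\, c_\nu\in\mathbb{C}\text{ with }\rho(\nu)\mathfrak{T}F=c_\nu\mathfrak{T}F\text{ for all }F\in\mathcal{S}(\mathbb{R}^{2d})\}$$ and let $q_H:\mathbb{R}^{4d}\to\mathbb{R}^{4d}/H$ be the quotient map. Then $q_H\circ\Phi:\mathbb{R}^{4d}\to\mathbb{R}^{4d}/H$ is one-to-one.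
   Context: For $x,\omega,t\in\mathbb{R}^{2d}$: $T_xF(t)=F(t-x)$, $M_\omega F(t)=e^{2\pi i\omega\cdot t}F(t)$, and for $(x,\omega)\in\mathbb{R}^{4d}$, $\rho(x,\omega)=T_{x/2}M_\omega T_{x/2}$, acting on $\mathcal{S}(\mathbb{R}^{2d})$ and by duality on $\mathcal{S}'(\mathbb{R}^{2d})$. $H$ is a subgroup of $\mathbb{R}^{4d}$. Continuity of $\mathfrak{T}$ is from the Schwartz topology to the weak* topology. *)

(* Defs.v *)
From HB Require Import structures.
From mathcomp Require Import all_boot all_order all_algebra.
From mathcomp Require Import all_classical all_reals.
From mathcomp Require Import topology normedtype derive trigo.
From mathcomp Require Import complex.

Set Implicit Arguments.
Unset Strict Implicit.
Unset Printing Implicit Defensive.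

Import Order.TTheory GRing.Theory Num.Theory.
Import numFieldNormedType.Exports.
Local Open Scope ring_scope.

Section Defs.
Variables (R : realType) (n : nat).

Notation pt := 'rV[R]_n.

Definition evec (j : 'I_n) : pt := \row_k (k == j)%:R.

Definition pderiv (j : 'I_n) (f : pt -> R) : pt -> R :=
  fun x => 'D_(evec j) f x.

(* iterated partial derivative d^beta, beta given as a list of directions *)
Definition dpart (s : seq 'I_n) (f : pt -> R) : pt -> R := foldr pderiv f s.

(* monomial t^alpha, alpha given as a list of coordinates (with repetition) *)
Definition mono (a : seq 'I_n) (t : pt) : R := \prod_(i <- a) t ord0 i.

Definition smooth (f : pt -> R) : Prop :=
  forall (s : seq 'I_n) (j : 'I_n) (x : pt), derivable (dpart s f) x (evec j).

Definition rschwartz (f : pt -> R) : Prop :=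
  smooth f /\
  forall (a s : seq 'I_n), exists M : R, forall t : pt,
    `| mono a t * dpart s f t | <= M.

Definition schwartz (F : pt -> R[i]) : Prop :=
  rschwartz (fun t => complex.Re (F t)) /\ rschwartz (fun t => complex.Im (F t)).

(* basic neighbourhoods of the Schwartz (Frechet) topology:
   G is in the (N, eps)-neighbourhood of F iff all seminorms
   sup_t |t^alpha d^beta (G - F)(t)| with |alpha|,|beta| <= N are <= eps
   (seminorms taken on real and imaginary parts). *)
Definition snbhs (N : nat) (eps : R) (F G : pt -> R[i]) : Prop :=
  forall (a s : seq 'I_n), (size a <= N)%N -> (size s <= N)%N ->
  forall t : pt,
    `| mono a t * dpart s (fun u => complex.Re (G u) - complex.Re (F u)) t | <= eps /\
    `| mono a t * dpart s (fun u => complex.Im (G u) - complex.Im (F u)) t | <= eps.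

Definition scontinuous (L : (pt -> R[i]) -> R[i]) : Prop :=
  forall F0, schwartz F0 ->
  forall eps : R, 0 < eps -> exists (N : nat) (delta : R), 0 < delta /\
    forall F, schwartz F -> snbhs N delta F0 F ->
      ComplexField.Normc.normc (L F - L F0) < eps.

Definition slinear (L : (pt -> R[i]) -> R[i]) : Prop :=
  forall (c : R[i]) F G, schwartz F -> schwartz G ->
    L (fun t => c * F t + G t) = c * L F + L G.

Definition tempered (u : (pt -> R[i]) -> R[i]) : Prop :=
  slinear u /\ scontinuous u.

Definition expi (th : R) : R[i] := (cos th +i* sin th)%C.

Definition dotv (x y : pt) : R := \sum_(i < n) x ord0 i * y ord0 i.

(* time-frequency shift rho(x, w) = T_{x/2} M_w T_{x/2} on functions:
   rho(x,w) F (t) = e^{2 pi i w.(t - x/2)} F(t - x) *)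
Definition rho (lam : pt * pt) (F : pt -> R[i]) : pt -> R[i] :=
  fun t => expi (2 * pi * dotv lam.2 (t - 2^-1 *: lam.1)) * F (t - lam.1).

(* rho on S'(R^n), extended by duality w.r.t. the bilinear pairing
   <u, g>:  <rho(x,w) u, g> = <u, rho(-x,w) g>
   (rho(-x,w) is the transpose of rho(x,w)). *)
Definition rhoD (lam : pt * pt) (u : (pt -> R[i]) -> R[i]) : (pt -> R[i]) -> R[i] :=
  fun g => u (rho (- lam.1, lam.2) g).

(* An operator T : S -> S' is encoded by its pairings T F g = <T F, g>. *)
Definition stoS' (T : (pt -> R[i]) -> (pt -> R[i]) -> R[i]) : Prop :=
  forall F, schwartz F -> tempered (T F).

Definition op_linear (T : (pt -> R[i]) -> (pt -> R[i]) -> R[i]) : Prop :=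
  forall (c : R[i]) F G, schwartz F -> schwartz G -> forall g, schwartz g ->
    T (fun t => c * F t + G t) g = c * T F g + T G g.

(* continuity from the Schwartz topology to the weak* topology of S' *)
Definition op_continuous (T : (pt -> R[i]) -> (pt -> R[i]) -> R[i]) : Prop :=
  forall g, schwartz g -> scontinuous (fun F => T F g).

Definition op_nonzero (T : (pt -> R[i]) -> (pt -> R[i]) -> R[i]) : Prop :=
  exists F g, [/\ schwartz F, schwartz g & T F g != 0].

Definition Hset (T : (pt -> R[i]) -> (pt -> R[i]) -> R[i]) (nu : pt * pt) : Prop :=
  exists c : R[i], forall F, schwartz F -> forall g, schwartz g ->
    rhoD nu (T F) g = c * T F g.

End Defs.

(* Main.v *)
Require Import Defs.
From HB Require Import structures.
From mathcomp Require Import all_boot all_order all_algebra.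
From mathcomp Require Import all_classical all_reals.
From mathcomp Require Import topology normedtype derive trigo.
From mathcomp Require Import complex.
From mathcomp Require Import ring lra.
Import Order.TTheory GRing.Theory Num.Theory.
Import numFieldNormedType.Exports.
Local Open Scope ring_scope.
Set Implicit Arguments.
Unset Strict Implicit.
Section Aux.
Variables (R : realType) (n : nat).
Notation pt := 'rV[R]_n.
Lemma derive_line (f : pt -> R) x v :
  'D_v f x = 'D_1 (fun h : R => f (h *: v + x)) 0.
Proof.
rewrite /derive; set g1 := fun h => h^-1 *: _; set g2 := fun h => h^-1 *: _.
suff -> : g1 = g2 by [].
by rewrite funeqE /g1 /g2 => h /=; rewrite addr0 scale0r add0r [_%:A]mulr1.
Qed.
Lemma shiftT_eq (f : pt -> R) x0 x v :
 (fun h : R => h^-1 *: (((fun t => f (t - x0)) \o shift x) (h *: v) - f (x - x0)))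
 = (fun h : R => h^-1 *: ((f \o shift (x - x0)) (h *: v) - f (x - x0))).
Proof. by rewrite funeqE => h /=; rewrite addrA. Qed.
Lemma derive_shiftT (f : pt -> R) x0 x v :
  'D_v (fun t => f (t - x0)) x = 'D_v f (x - x0).
Proof. by rewrite /derive shiftT_eq. Qed.
Lemma derivable_shiftT (f : pt -> R) x0 x v :
  derivable (fun t => f (t - x0)) x v = derivable f (x - x0) v.
Proof. by rewrite /derivable shiftT_eq. Qed.
Lemma aff_der (b c : R) : derivable (fun h : R => h * c + b) 0 1 /\ 'D_1 (fun h : R => h * c + b) 0 = c.
Proof.
have hid : derivable (@id R) 0 1 := @derivable_id _ R (0:R) (1:R).
have hc : derivable (cst c : R -> R) 0 1 := derivable_cst c (0:R) (1:R).
have hb : derivable (cst b : R -> R) 0 1 := derivable_cst b (0:R) (1:R).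
have h1 : derivable (fun h : R => h * c) 0 1 := derivableM hid hc.
split; first exact: (derivableD h1 hb).
have := deriveD h1 hb. move=> /= ->.
have := deriveM hid hc. move=> /= ->.
by rewrite !derive_cst derive_id addr0 scaler0 add0r /=; rewrite [_%:A]mulr1.
Qed.
Lemma cos_aff (b c : R) : derivable (fun h : R => cos (h * c + b)) 0 1 /\
   'D_1 (fun h : R => cos (h * c + b)) 0 = - sin b * c.
Proof.
have [d1 d2] := aff_der b c.
have dc : derivable (@cos R) b 1 := @derivable_cos R b.
have e : (fun h : R => cos (h * c + b)) = cos \o (fun h : R => h * c + b) by [].
split.
  rewrite e; apply/derivable1_diffP; apply: differentiable_comp.
    exact/derivable1_diffP.
  rewrite mul0r add0r; exact: (derivable1_diffP cos b).1 dc.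
have -> : 'D_1 (fun h : R => cos (h * c + b)) 0 = 'D_1 (cos \o (fun h : R => h * c + b)) 0 by [].
rewrite -derive1E derive1_comp //.
rewrite !derive1E d2 mul0r add0r.
by rewrite (@derive_val _ _ _ _ _ _ _ (is_derive_cos b)).
Qed.
Lemma sin_aff (b c : R) : derivable (fun h : R => sin (h * c + b)) 0 1 /\
   'D_1 (fun h : R => sin (h * c + b)) 0 = cos b * c.
Proof.
have [d1 d2] := aff_der b c.
have dc : derivable (@sin R) b 1 := @derivable_sin R b.
have e : (fun h : R => sin (h * c + b)) = sin \o (fun h : R => h * c + b) by [].
split.
  rewrite e; apply/derivable1_diffP; apply: differentiable_comp.
    exact/derivable1_diffP.
  rewrite mul0r add0r; exact: (derivable1_diffP sin b).1 dc.
have -> : 'D_1 (fun h : R => sin (h * c + b)) 0 = 'D_1 (sin \o (fun h : R => h * c + b)) 0 by [].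
rewrite -derive1E derive1_comp //.
rewrite !derive1E d2 mul0r add0r.
by rewrite (@derive_val _ _ _ _ _ _ _ (is_derive_sin b)).
Qed.

Lemma derive_lin2 (F G : pt -> R) a b x v : derivable F x v -> derivable G x v ->
  derivable (fun t => a * F t + b * G t) x v /\
  'D_v (fun t => a * F t + b * G t) x = a * 'D_v F x + b * 'D_v G x.
Proof.
move=> dF dG.
have dF' := derivableM (derivable_cst a x v) dF.
have dG' := derivableM (derivable_cst b x v) dG.
split; first exact: (derivableD dF' dG').
have := deriveD dF' dG'. move=> /= ->.
have := deriveM (derivable_cst a x v) dF. move=> /= ->.
have := deriveM (derivable_cst b x v) dG. move=> /= ->.
by rewrite !derive_cst !scaler0 !addr0.
Qed.

Lemma derive_mul2 (P A : pt -> R) x v : derivable P x v -> derivable A x v ->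
  derivable (fun t => P t * A t) x v /\
  'D_v (fun t => P t * A t) x = P x * 'D_v A x + A x * 'D_v P x.
Proof.
move=> dP dA; split; first exact: (derivableM dP dA).
by have := deriveM dP dA.
Qed.

Lemma derive_sub2 (P A : pt -> R) x v : derivable P x v -> derivable A x v ->
  derivable (fun t => P t - A t) x v /\
  'D_v (fun t => P t - A t) x = 'D_v P x - 'D_v A x.
Proof.
move=> dP dA; split; first exact: (derivableB dP dA).
by have := deriveB dP dA.
Qed.


Lemma dpart_cons (j : 'I_n) s (f : pt -> R) : dpart (j :: s) f = pderiv j (dpart s f).
Proof. by []. Qed.

Lemma dpart_lin (f g : pt -> R) a b s : smooth f -> smooth g ->
  dpart s (fun t => a * f t + b * g t) = (fun t => a * dpart s f t + b * dpart s g t).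
Proof.
move=> sf sg; elim: s => [//|j s IH].
rewrite dpart_cons IH; apply/funext => x.
by rewrite /pderiv (derive_lin2 a b (sf s j x) (sg s j x)).2.
Qed.

Lemma rschwartz_lin (f g : pt -> R) a b : rschwartz f -> rschwartz g ->
  rschwartz (fun t => a * f t + b * g t).
Proof.
move=> [sf bf] [sg bg]; split.
  move=> s j x; rewrite dpart_lin //.
  exact: (derive_lin2 a b (sf s j x) (sg s j x)).1.
move=> al s; have [M1 H1] := bf al s; have [M2 H2] := bg al s.
exists (`|a| * M1 + `|b| * M2) => t; rewrite dpart_lin //.
rewrite mulrDr (le_trans (ler_normD _ _)) // lerD //.
  rewrite mulrCA normrM ler_wpM2l //.
rewrite mulrCA normrM ler_wpM2l //.
Qed.

Lemma rschwartz_pderiv (f : pt -> R) j : rschwartz f -> rschwartz (pderiv j f).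
Proof.
move=> [sf bf]; split.
  move=> s i x; have := sf (s ++ [:: j]) i x; by rewrite /dpart foldr_cat.
move=> al s; have [M H] := bf al (s ++ [:: j]).
by exists M => t; have := H t; rewrite /dpart foldr_cat.
Qed.

Lemma mono_cons i a (t : pt) : mono (i :: a) t = t ord0 i * mono a t.
Proof. by rewrite /mono big_cons. Qed.

Lemma mono_shift (x0 : pt) a : forall g : pt -> R,
  (forall b, exists M : R, forall u, `|mono b u * g u| <= M) ->
  exists M : R, forall t, `|mono a t * g (t - x0)| <= M.
Proof.
elim: a => [|i a IH] g Hg.
  have [M HM] := Hg [::]; exists M => t; by have := HM (t - x0); rewrite /mono !big_nil.
have Hg1 : forall b, exists M : R, forall u, `|mono b u * (u ord0 i * g u)| <= M.
  move=> b; have [M HM] := Hg (i :: b); exists M => u.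
  by rewrite mulrA (mulrC _ (u ord0 i)) -mono_cons.
have [M1 H1] := IH (fun u => u ord0 i * g u) Hg1.
have [M2 H2] := IH g Hg.
exists (M1 + `|x0 ord0 i| * M2) => t.
have -> : mono (i :: a) t * g (t - x0) =
   mono a t * ((t - x0) ord0 i * g (t - x0)) + x0 ord0 i * (mono a t * g (t - x0)).
  rewrite mono_cons !mxE; ring.
rewrite (le_trans (ler_normD _ _)) // lerD //.
by rewrite normrM ler_wpM2l.
Qed.

Lemma dpart_shift (f : pt -> R) x0 s : 
  dpart s (fun t => f (t - x0)) = (fun t => dpart s f (t - x0)).
Proof.
elim: s => [//|j s IH]; rewrite dpart_cons IH; apply/funext => x.
by rewrite /pderiv derive_shiftT.
Qed.

Lemma rschwartz_shift (f : pt -> R) x0 : rschwartz f -> rschwartz (fun t => f (t - x0)).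
Proof.
move=> [sf bf]; split.
  by move=> s j x; rewrite dpart_shift derivable_shiftT.
move=> a s; rewrite dpart_shift.
apply: mono_shift => b; exact: bf.
Qed.


Section Trig.
Variables (th : pt -> R) (cth : 'I_n -> R).
Hypothesis hth : forall j h x, th (h *: evec R j + x) = h * cth j + th x.

Lemma dcos j x : derivable (fun t => cos (th t)) x (evec R j) /\
  'D_(evec R j) (fun t => cos (th t)) x = - sin (th x) * cth j.
Proof.
have e : (fun h : R => cos (th (h *: evec R j + x))) = (fun h => cos (h * cth j + th x)).
  by apply/funext => h; rewrite hth.
split; first by apply/derivable1P; rewrite e; exact: (cos_aff _ _).1.
by rewrite derive_line e (cos_aff _ _).2.
Qed.

Lemma dsin j x : derivable (fun t => sin (th t)) x (evec R j) /\
  'D_(evec R j) (fun t => sin (th t)) x = cos (th x) * cth j.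
Proof.
have e : (fun h : R => sin (th (h *: evec R j + x))) = (fun h => sin (h * cth j + th x)).
  by apply/funext => h; rewrite hth.
split; first by apply/derivable1P; rewrite e; exact: (sin_aff _ _).1.
by rewrite derive_line e (sin_aff _ _).2.
Qed.

Definition Gf (A B : pt -> R) := fun t => cos (th t) * A t - sin (th t) * B t.

Lemma dGf (A B : pt -> R) j x : derivable A x (evec R j) -> derivable B x (evec R j) ->
  derivable (Gf A B) x (evec R j) /\
  'D_(evec R j) (Gf A B) x =
    Gf (fun t => 1 * pderiv j A t + (- cth j) * B t)
       (fun t => 1 * pderiv j B t + cth j * A t) x.
Proof.
move=> dA dB.
have [c1 c2] := dcos j x; have [s1 s2] := dsin j x.
have [m1 m2] := derive_mul2 c1 dA; have [m3 m4] := derive_mul2 s1 dB.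
have [u1 u2] := derive_sub2 m1 m3.
split; first exact: u1.
rewrite /Gf u2 m2 m4 c2 s2 /pderiv; ring.
Qed.

Lemma dpart_Gf s : forall A B, rschwartz A -> rschwartz B ->
  exists A' B', [/\ rschwartz A', rschwartz B' & dpart s (Gf A B) = Gf A' B'].
Proof.
elim: s => [|j s IH] A B sA sB; first by exists A, B.
have [A' [B' [sA' sB' e]]] := IH A B sA sB.
exists (fun t => 1 * pderiv j A' t + (- cth j) * B' t),
       (fun t => 1 * pderiv j B' t + cth j * A' t).
split.
- by apply: rschwartz_lin => //; apply: rschwartz_pderiv.
- by apply: rschwartz_lin => //; apply: rschwartz_pderiv.
rewrite dpart_cons e; apply/funext => x.
have dA' : derivable A' x (evec R j) by case: sA' => h _; exact: (h [::]).
have dB' : derivable B' x (evec R j) by case: sB' => h _; exact: (h [::]).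
by rewrite /pderiv (dGf dA' dB').2.
Qed.

Lemma rschwartz_Gf A B : rschwartz A -> rschwartz B -> rschwartz (Gf A B).
Proof.
move=> sA sB; split.
  move=> s j x; have [A' [B' [sA' sB' ->]]] := dpart_Gf s sA sB.
  have dA' : derivable A' x (evec R j) by case: sA' => h _; exact: (h [::]).
  have dB' : derivable B' x (evec R j) by case: sB' => h _; exact: (h [::]).
  exact: (dGf dA' dB').1.
move=> a s; have [A' [B' [[_ bA] [_ bB] ->]]] := dpart_Gf s sA sB.
have [M1 H1] := bA a [::]; have [M2 H2] := bB a [::].
exists (M1 + M2) => t.
have -> : mono a t * Gf A' B' t = cos (th t) * (mono a t * A' t) - sin (th t) * (mono a t * B' t).
  rewrite /Gf; ring.
rewrite (le_trans (ler_normB _ _)) // lerD //.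
  rewrite normrM -[X in _ <= X]mul1r ler_pM ?cos_max //; exact: H1.
rewrite normrM -[X in _ <= X]mul1r ler_pM ?sin_max //; exact: H2.
Qed.

End Trig.


Lemma dotvD (w u v : pt) : dotv w (u + v) = dotv w u + dotv w v.
Proof. by rewrite /dotv -big_split; apply: eq_bigr => i _; rewrite mxE mulrDr. Qed.
Lemma dotvDl (w u v : pt) : dotv (u + v) w = dotv u w + dotv v w.
Proof. by rewrite /dotv -big_split; apply: eq_bigr => i _; rewrite mxE mulrDl. Qed.
Lemma dotvZ (w v : pt) k : dotv w (k *: v) = k * dotv w v.
Proof. by rewrite /dotv mulr_sumr; apply: eq_bigr => i _; rewrite mxE mulrCA. Qed.
Lemma dotvZl (w v : pt) k : dotv (k *: v) w = k * dotv v w.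
Proof. by rewrite /dotv mulr_sumr; apply: eq_bigr => i _; rewrite mxE mulrA. Qed.
Lemma dotvN (w v : pt) : dotv w (- v) = - dotv w v.
Proof. by rewrite -scaleN1r dotvZ mulN1r. Qed.
Lemma dotvNl (w v : pt) : dotv (- v) w = - dotv v w.
Proof. by rewrite -scaleN1r dotvZl mulN1r. Qed.
Lemma dotvB (w u v : pt) : dotv w (u - v) = dotv w u - dotv w v.
Proof. by rewrite dotvD dotvN. Qed.
Lemma dotvBl (w u v : pt) : dotv (u - v) w = dotv u w - dotv v w.
Proof. by rewrite dotvDl dotvNl. Qed.
Lemma dotv0 (w : pt) : dotv w 0 = 0.
Proof. by rewrite /dotv big1 // => i _; rewrite mxE mulr0. Qed.
Lemma dotv0l (w : pt) : dotv 0 w = 0.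
Proof. by rewrite /dotv big1 // => i _; rewrite mxE mul0r. Qed.
Lemma dotv_evec (w : pt) j : dotv w (evec R j) = w ord0 j.
Proof.
rewrite /dotv (bigD1 j) //= big1 ?addr0; first by rewrite mxE eqxx mulr1.
by move=> i /negbTE hi; rewrite mxE hi mulr0.
Qed.
Lemma dotv_evecl (w : pt) j : dotv (evec R j) w = w ord0 j.
Proof.
rewrite /dotv (bigD1 j) //= big1 ?addr0; first by rewrite mxE eqxx mul1r.
by move=> i /negbTE hi; rewrite mxE hi mul0r.
Qed.

Lemma Re_expiM th (z : R[i]) : complex.Re (expi th * z) = cos th * complex.Re z - sin th * complex.Im z.
Proof. by case: z => a b /=. Qed.
Lemma Im_expiM th (z : R[i]) : complex.Im (expi th * z) = cos th * complex.Im z - sin th * (- complex.Re z).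
Proof. case: z => a b /=; ring. Qed.

Lemma schwartz_rho lam (F : pt -> R[i]) : schwartz F -> schwartz (rho lam F).
Proof.
move=> [sRe sIm].
pose th := fun t : pt => 2 * pi * dotv lam.2 (t - 2^-1 *: lam.1).
have hth : forall j h x, th (h *: evec R j + x) = h * (2 * pi * lam.2 ord0 j) + th x.
  move=> j h x; rewrite /th !dotvB dotvD dotvZ dotv_evec; ring.
split.
  have -> : (fun t => complex.Re (rho lam F t)) =
     Gf th (fun t => complex.Re (F (t - lam.1))) (fun t => complex.Im (F (t - lam.1))).
    by apply/funext => t; rewrite /rho Re_expiM.
  apply: (@rschwartz_Gf th (fun j => 2 * pi * lam.2 ord0 j) hth).
  exact: (@rschwartz_shift (fun u => complex.Re (F u)) lam.1 sRe).
  exact: (@rschwartz_shift (fun u => complex.Im (F u)) lam.1 sIm).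
have -> : (fun t => complex.Im (rho lam F t)) =
   Gf th (fun t => complex.Im (F (t - lam.1)))
         (fun t => (-1) * complex.Re (F (t - lam.1)) + 0 * complex.Re (F (t - lam.1))).
  by apply/funext => t; rewrite /rho Im_expiM /Gf; congr (_ - _ * _); ring.
apply: (@rschwartz_Gf th (fun j => 2 * pi * lam.2 ord0 j) hth).
  exact: (@rschwartz_shift (fun u => complex.Im (F u)) lam.1 sIm).
by apply: rschwartz_lin; exact: (@rschwartz_shift (fun u => complex.Re (F u)) lam.1 sRe).
Qed.


Lemma expiD (a b : R) : expi a * expi b = expi (a + b) :> R[i].
Proof. rewrite /expi /= cosD sinD; congr (Complex _ _); ring. Qed.
Lemma expi0 : expi (0:R) = 1 :> R[i].
Proof. by rewrite /expi cos0 sin0. Qed.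
Lemma expiNK (a : R) : expi (- a) * expi a = 1 :> R[i].
Proof. by rewrite expiD addNr expi0. Qed.
Lemma expi_eq1 (a : R) : expi a = 1 -> cos a = 1.
Proof. by move=> /(congr1 (@complex.Re R)). Qed.

Definition ph (a b : pt * pt) : R := pi * (dotv a.2 b.1 - dotv b.2 a.1).

Lemma ph_id (a1 a2 b1 b2 t : pt) :
  2 * pi * dotv a2 (t - 2^-1 *: a1) + 2 * pi * dotv b2 (t - a1 - 2^-1 *: b1) =
  pi * (dotv a2 b1 - dotv b2 a1) + 2 * pi * dotv (a2 + b2) (t - 2^-1 *: (a1 + b1)).
Proof. rewrite !dotvB !dotvZ !dotvDl !dotvD; by field. Qed.

Lemma rho_comp (a b : pt * pt) (F : pt -> R[i]) : rho a (rho b F) = (fun t => expi (ph a b) * rho (a + b) F t).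
Proof.
apply/funext => t; rewrite /rho /= mulrA expiD [RHS]mulrA expiD.
have -> : t - a.1 - b.1 = t - (a.1 + b.1) by rewrite opprD addrA.
congr (expi _ * _); exact: ph_id.
Qed.

Lemma rho0 (F : pt -> R[i]) : rho (0 : pt * pt) F = F.
Proof.
apply/funext => t; rewrite /rho /= dotv0l mulr0 expi0 mul1r subr0 //.
Qed.

Lemma rho_inv (a : pt * pt) (F : pt -> R[i]) : rho a (rho (- a) F) = F.
Proof.
rewrite rho_comp (subrr a) rho0; apply/funext => t.
rewrite /ph /= dotvN dotvNl subrr mulr0 expi0 mul1r //.
Qed.


Definition Rt (nu : pt * pt) : pt * pt := (- nu.1, nu.2).
Lemma rhoDE nu (u : (pt -> R[i]) -> R[i]) g : rhoD nu u g = u (rho (Rt nu) g).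
Proof. by []. Qed.

Lemma ph_fst (s : pt * pt) i : s.1 ord0 i != 0 ->
  ph s (0, (2 * s.1 ord0 i)^-1 *: evec R i) - ph (0, (2 * s.1 ord0 i)^-1 *: evec R i) s = - pi.
Proof.
move=> hi; rewrite /ph /= dotv0 dotvZl dotv_evecl; field.
by [].
Qed.

Lemma ph_snd (s : pt * pt) i : s.2 ord0 i != 0 ->
  ph s ((2 * s.2 ord0 i)^-1 *: evec R i, 0) - ph ((2 * s.2 ord0 i)^-1 *: evec R i, 0) s = pi.
Proof.
move=> hi; rewrite /ph /= dotv0l dotvZ dotv_evec; field.
by [].
Qed.

Lemma row0P (v : pt) : (forall i, v ord0 i = 0) -> v = 0.
Proof. by move=> H; apply/rowP => i; rewrite H mxE. Qed.

End Aux.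

Unset Implicit Arguments.
Set Strict Implicit.

Theorem lemma4p4 (R : realType) (d : nat) (hd : (0 < d)%N)
  (T : ('rV[R]_(2 * d) -> R[i]) -> ('rV[R]_(2 * d) -> R[i]) -> R[i])
  (Phi : 'rV[R]_(2 * d) * 'rV[R]_(2 * d) -> 'rV[R]_(2 * d) * 'rV[R]_(2 * d)) :
  stoS' T -> op_linear T -> op_continuous T -> op_nonzero T ->
  (forall lam, exists c : R[i], forall F, schwartz F -> forall g, schwartz g ->
     T (rho lam F) g = c * rhoD (Phi lam) (T F) g) ->
  forall lam mu, Hset T (Phi lam - Phi mu) -> lam = mu.
Proof.
move=> HS Hlin _ [F0 [g0 [sF0 sg0 nz]]] Hcov lam mu [cnu Hnu].
have scalF : forall c F g, schwartz F -> schwartz g -> T (fun t => c * F t) g = c * T F g.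
  move=> c F g sF sg; have := Hlin (c - 1) F F sF sF g sg.
  have -> : (fun t => (c - 1) * F t + F t) = (fun t => c * F t) by apply/funext => t; ring.
  move=> ->; ring.
have scalg : forall c F g, schwartz F -> schwartz g -> T F (fun t => c * g t) = c * T F g.
  move=> c F g sF sg; have [Hl _] := HS F sF; have := Hl (c - 1) g g sg sg.
  have -> : (fun t => (c - 1) * g t + g t) = (fun t => c * g t) by apply/funext => t; ring.
  move=> ->; ring.
have Z : forall s, (forall F g, schwartz F -> schwartz g -> T (rho s F) g = 0) -> False.
  move=> s H; move/eqP: nz; apply; rewrite -(rho_inv s F0); apply: H => //.
  exact: schwartz_rho.
have cnz : forall l c, (forall F, schwartz F -> forall g, schwartz g ->
    T (rho l F) g = c * rhoD (Phi l) (T F) g) -> c != 0.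
  move=> l c H; apply/eqP => c0; apply: (Z l) => F g sF sg; by rewrite H // c0 mul0r.
have [cl Hl] := Hcov lam; have [cm Hm] := Hcov mu.
have nzm := cnz _ _ Hm.
set nu := Phi lam - Phi mu in Hnu.
pose k := expi (- ph lam (- mu)) * cl * expi (- ph (Rt nu) (Rt (Phi mu))) * cnu / cm.
have eRt : Rt (Phi lam) = Rt nu + Rt (Phi mu).
  rewrite /Rt /nu /=; congr pair; first by rewrite -opprD subrK.
  by rewrite subrK.
have key : forall F g, schwartz F -> schwartz g -> T (rho (lam - mu) F) g = k * T F g.
  move=> F g sF sg.
  have sF' : schwartz (rho (- mu) F) := schwartz_rho _ sF.
  have sh : schwartz (rho (Rt (Phi mu)) g) := schwartz_rho _ sg.
  have e1 : T (rho lam (rho (- mu) F)) g = expi (ph lam (- mu)) * T (rho (lam - mu) F) g.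
    by rewrite rho_comp scalF //; exact: schwartz_rho.
  have e2 := Hl _ sF' g sg.
  have e3 : rho (Rt (Phi lam)) g =
      (fun t => expi (- ph (Rt nu) (Rt (Phi mu))) * rho (Rt nu) (rho (Rt (Phi mu)) g) t).
    rewrite rho_comp -eRt; apply/funext => t; by rewrite mulrA expiNK mul1r.
  have e4 := Hnu _ sF' _ sh.
  have e5 := Hm _ sF' g sg.
  rewrite rho_inv in e5.
  rewrite rhoDE in e2; rewrite rhoDE in e4; rewrite rhoDE in e5.
  have E : expi (ph lam (- mu)) * T (rho (lam - mu) F) g =
     cl * (expi (- ph (Rt nu) (Rt (Phi mu))) * (cnu * T (rho (- mu) F) (rho (Rt (Phi mu)) g))).
    by rewrite -e1 e2 e3 scalg //; [rewrite e4 | exact: schwartz_rho].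
  rewrite -[T (rho _ F) g]mul1r -(expiNK (ph lam (- mu))) -mulrA E e5 /k.
  by field.
have knz : k != 0.
  apply/eqP => k0; apply: (Z (lam - mu)) => F g sF sg; by rewrite key // k0 mul0r.
have comm : forall tau, cos (ph (lam - mu) tau - ph tau (lam - mu)) = 1.
  move=> tau; apply: expi_eq1.
  have [ct Ht] := Hcov tau; have nzt := cnz _ _ Ht.
  pose g := rho (- Rt (Phi tau)) g0.
  have sg : schwartz g := schwartz_rho _ sg0.
  have eg : rho (Rt (Phi tau)) g = g0 by rewrite /g rho_inv.
  have sF1 : schwartz (rho tau F0) := schwartz_rho _ sF0.
  have sF2 : schwartz (rho (lam - mu) F0) := schwartz_rho _ sF0.
  have A1 : T (rho (lam - mu) (rho tau F0)) g = k * (ct * T F0 g0).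
    by rewrite key // Ht // rhoDE eg.
  have ecomm : rho (lam - mu) (rho tau F0) = (fun t =>
      expi (ph (lam - mu) tau - ph tau (lam - mu)) * rho tau (rho (lam - mu) F0) t).
    rewrite !rho_comp (addrC tau (lam - mu)); apply/funext => t /=.
    by rewrite mulrA expiD subrK.
  have A2 : T (rho (lam - mu) (rho tau F0)) g =
      expi (ph (lam - mu) tau - ph tau (lam - mu)) * (ct * (k * T F0 g0)).
    rewrite ecomm scalF //; last exact: schwartz_rho.
    by rewrite Ht // rhoDE eg key.
  set D := expi _ in A2 *.
  have : (D - 1) * (k * (ct * T F0 g0)) = 0.
    have E : k * (ct * T F0 g0) = D * (ct * (k * T F0 g0)) by rewrite -A1 A2.
    by rewrite mulrBl mul1r {2}E; ring.
  move/eqP; rewrite mulf_eq0 (negbTE (mulf_neq0 knz (mulf_neq0 nzt nz))) orbF subr_eq0.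
  by move/eqP.
have cospiN : cos (- pi) = - 1 :> R by rewrite cosN cospi.
have h1 : (lam - mu).1 = 0.
  apply: row0P => i; apply/eqP; apply/negPn/negP => hi.
  have := comm (0, (2 * (lam - mu).1 ord0 i)^-1 *: evec R i).
  rewrite ph_fst // cospiN; lra.
have h2 : (lam - mu).2 = 0.
  apply: row0P => i; apply/eqP; apply/negPn/negP => hi.
  have := comm ((2 * (lam - mu).2 ord0 i)^-1 *: evec R i, 0).
  rewrite ph_snd // cospi; lra.
move: h1 h2; case: lam {Hl Hnu nu k eRt key knz comm} => l1 l2; case: mu {Hm nzm} => m1 m2 /= h1 h2.
by rewrite (subr0_eq h1) (subr0_eq h2).
Qed.
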